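(* Let $\mathcal I$ be an ideal on $\mathbb N$ with the Baire property, and let $\sum_n x_n$ be a series in a Banach space $X$. Then $\sum_n x_n$ is unconditionally convergent if and only if the set $$B(\mathcal I,(x_n)):=\left\{t \in \{-1,1\}^{\mathbb N} \colon \sum_n t(n)x_n \text{ is } \mathcal I\text{-convergent}\right\}$$ is nonmeager in $\{-1,1\}^{\mathbb N}$ (with the product topology).
   Context: $\mathbb N=\{1,2,\dots\}$. An ideal on $\mathbb N$ is a family $\mathcal I\subset\mathcal P(\mathbb N)$ closed under finite unions and subsets, with $\mathbb N\notin\mathcal I$ and containing all finite subsets of $\mathbb N$. Identifying subsets of $\mathbb N$ with their characteristic functions, $\mathcal I$ is regarded as a subset of the Cantor space $\{0,1\}^{\mathbb N}$ (product topology), and ''$\mathcal I$ has the Baire property'' refers to this subset. A sequence $(y_n)$ in a normed space is $\mathcal I$-convergent to $y$ if $\{n:\|y_n-y\|>\varepsilon\}\in\mathcal I$ for every $\varepsilon>0$; a series is $\mathcal I$-convergent if its sequence of partial sums is $\mathcal I$-convergent to some element. A series $\sum_n x_n$ is unconditionally convergent if $\sum_n x_{p(n)}$ converges for every permutation $p$ of $\mathbb N$. Banach spaces are over $\mathbb R$. *)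

(* Defs.v *)
From HB Require Import structures.
From mathcomp Require Import all_boot all_order all_algebra.
From mathcomp Require Import all_classical all_reals all_analysis.
Set Implicit Arguments. Unset Strict Implicit. Unset Printing Implicit Defensive.
Import Order.TTheory GRing.Theory Num.Theory.
Import numFieldNormedType.Exports.
Local Open Scope classical_set_scope.
Local Open Scope ring_scope.

(* Conventions: the paper's index set N = {1,2,...} is represented by nat
   through the bijection m |-> m-1 (nat index n stands for the paper's n+1).
   A subset A of nat is identified with its characteristic function
   (fun n => `[< A n >]) : cantor_space = nat -> bool with the product topology. *)

Definition is_ideal (I : set (set nat)) : Prop :=
  [/\ (forall A B, I A -> I B -> I (A `|` B)),
      (forall A B, B `<=` A -> I A -> I B),
      ~ I [set: nat] &
      (forall A, finite_set A -> I A)].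

Definition nowhere_dense {T : topologicalType} (A : set T) : Prop :=
  (closure A)^° = set0.

Definition meager {T : topologicalType} (A : set T) : Prop :=
  exists F : nat -> set T,
    (forall n, nowhere_dense (F n)) /\ A `<=` \bigcup_n F n.

Definition has_Baire_property {T : topologicalType} (A : set T) : Prop :=
  exists U M : set T, [/\ open U, meager M & A = (U `\` M) `|` (M `\` U)].

Definition ideal_as_cantor_set (I : set (set nat)) : set cantor_space :=
  [set f : cantor_space | I [set n | f n]].

Definition I_convergent {R : realType} {V : normedModType R}
    (I : set (set nat)) (y : nat -> V) (l : V) : Prop :=
  forall e : R, 0 < e -> I [set n | e < `|y n - l|].

(* Partial sums s_1, s_2, ... of the series (paper indexing), i.e. the
   nat-indexed sequence n |-> x_0 + ... + x_n. *)
Definition partial_sums {R : realType} {V : normedModType R} (x : nat -> V)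
  : nat -> V := fun n => series x n.+1.

Definition I_convergent_series {R : realType} {V : normedModType R}
    (I : set (set nat)) (x : nat -> V) : Prop :=
  exists l : V, I_convergent I (partial_sums x) l.

Definition unconditionally_convergent {R : realType} {V : normedModType R}
    (x : nat -> V) : Prop :=
  forall p : nat -> nat, bijective p -> cvgn (series (fun n => x (p n))).

(* {-1,1}^N is encoded as cantor_space: true |-> 1, false |-> -1
   (a homeomorphism {0,1}^N ~ {-1,1}^N). *)
Definition sgn_of {R : realType} (b : bool) : R := if b then 1 else -1.

Definition B_set {R : realType} {V : normedModType R}
    (I : set (set nat)) (x : nat -> V) : set cantor_space :=
  [set t : cantor_space | I_convergent_series I (fun n => sgn_of (R:=R) (t n) *: x n)].

(* Main.v *)
Require Import Defs.
From HB Require Import structures.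
From mathcomp Require Import all_boot all_order all_algebra.
From mathcomp Require Import all_classical all_reals all_analysis.
From mathcomp Require Import lra.
Import Order.TTheory GRing.Theory Num.Theory.
Import numFieldNormedType.Exports.
Local Open Scope classical_set_scope.
Local Open Scope ring_scope.

Definition cyl (f : cantor_space) (n : nat) : set cantor_space :=
  [set t | forall i, (i < n)%N -> t i = f i].

Lemma cyl_nbhs (f : cantor_space) n : nbhs f (cyl f n).
Proof.
elim: n => [|n IH].
  have -> : cyl f 0 = setT by rewrite eqEsubset; split => // t _ i.
  exact: filterT.
have -> : cyl f n.+1 = cyl f n `&` (proj n @^-1` [set f n]).
  rewrite eqEsubset; split => t.
    move=> H; split; first by move=> i lt; apply: H; exact: ltnW.
    by rewrite /proj /=; apply: H.
  move=> [H1 H2] i; rewrite ltnS leq_eqVlt => /orP[/eqP->|/H1//].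
  exact: H2.
apply: filterI => //.
apply: (@proj_continuous nat (fun _ => bool) n f).
by apply/principal_filterP.
Qed.

Lemma nbhs_cyl (f : cantor_space) (U : set cantor_space) :
  nbhs f U -> exists n, cyl f n `<=` U.
Proof.
move=> Uf; apply: contrapT => /forallNP H.
have H' : forall n, exists g, cyl f n g /\ ~ U g.
  by move=> n; have /nonsubset[g [g1 g2]] := H n; exists g.
pose g n := projT1 (cid (H' n)).
have gP n : cyl f n (g n) /\ ~ U (g n) by rewrite /g; case: cid.
have gcvg : g @ \oo --> f.
  apply/cvg_sup => N V [W] [[Z] oZ <-] ZfN ZV.
  apply: (filterS ZV); rewrite nbhs_simpl; exists N.+1 => // i /= Ni.
  by rewrite /= (proj1 (gP i)).
have := gcvg _ Uf; rewrite nbhs_simpl => -[N _ HN].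
by apply: (proj2 (gP N)); apply: HN => /=.
Qed.

Lemma cyl_mono (g : cantor_space) m m' : (m <= m')%N -> cyl g m' `<=` cyl g m.
Proof. by move=> mm' t H i im; apply: H; exact: leq_trans im mm'. Qed.

Definition ND' (F : set cantor_space) := forall (f : cantor_space) n,
  exists g m, [/\ (n <= m)%N, (forall i, (i < n)%N -> g i = f i) &
                 (forall t, cyl g m t -> ~ F t)].

Lemma ND_ND' (F : set cantor_space) : nowhere_dense F -> ND' F.
Proof.
rewrite /nowhere_dense => H f n.
have [[g [gc gF]]|] := pselect (exists g, cyl f n g /\ ~ closure F g); last first.
  move=> /forallNP Hn; exfalso.
  have : (closure F)° f.
    rewrite /interior /=; apply: filterS (cyl_nbhs f n) => g gc.
    by have := Hn g; move=> /not_andP[//|/contrapT].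
  by rewrite H.
have : exists2 B, nbhs g B & forall t, B t -> ~ F t.
  apply: contrapT => Hn; apply: gF => B nB.
  apply: contrapT => /set0P/negP; rewrite negbK => /eqP FB.
  apply: Hn; exists B => // t Bt Ft.
  by have : (F `&` B) t by []; rewrite FB.
move=> [B nB BF].
have gn : cyl g n `<=` cyl f n by move=> t Ht i ltn; rewrite Ht // gc.
have [m Hm] := @nbhs_cyl g _ (filterI nB (cyl_nbhs g n)).
exists g, (maxn m n); split.
- exact: leq_maxr.
- exact: gc.
- move=> t /(@cyl_mono g _ _ (leq_maxl m n)) /Hm [Bt _]; exact: BF.
Qed.

Lemma BaireL (G : nat -> set cantor_space) : (forall j, ND' (G j)) ->
  forall (f : cantor_space) n, exists t, cyl f n t /\ forall j, ~ G j t.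
Proof.
move=> HG f n.
have step : forall j (p : cantor_space * nat), {q : cantor_space * nat |
   [/\ (p.2 < q.2)%N, forall i, (i < p.2)%N -> q.1 i = p.1 i &
       forall t, cyl q.1 q.2 t -> ~ G j t]}.
  move=> j p; apply: cid.
  have [g [m [H1 H2 H3]]] := HG j p.1 p.2.+1.
  exists (g, m); split => //= i ip; apply: H2; exact: ltnW.
pose sq := fix sq k := match k with 0 => (f, n) | k.+1 => proj1_sig (step k (sq k)) end.
have sqS k : sq k.+1 = proj1_sig (step k (sq k)) by [].
have incr k : ((sq k).2 < (sq k.+1).2)%N by rewrite sqS; case: (step k (sq k)) => q [].
have mk k : (k <= (sq k).2)%N.
  elim: k => // k IH; exact: leq_ltn_trans IH (incr k).
have mono k d : ((sq k).2 <= (sq (k + d)%N).2)%N.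
  elim: d => [|d IH']; first by rewrite addn0.
  apply: leq_trans IH' _; rewrite addnS; exact: ltnW (incr _).
have nest k d : forall i, (i < (sq k).2)%N -> (sq (k + d)%N).1 i = (sq k).1 i.
  elim: d => [|d IH] i ik; first by rewrite addn0.
  rewrite addnS sqS; case: (step (k + d)%N (sq (k + d)%N)) => q [q1 q2 q3] /=.
  rewrite q2; first exact: IH.
  exact: leq_trans ik (mono k d).
pose t : cantor_space := fun i => (sq i.+1).1 i.
have tin k : cyl (sq k).1 (sq k).2 t.
  move=> i ik; rewrite /t.
  have [ki|ik'] := leqP k i.+1.
    by rewrite -(subnKC ki) nest.
  rewrite -(subnKC (ltnW ik')) nest //.
exists t; split; first exact: (tin 0%N).
move=> j; have := tin j.+1; rewrite sqS; case: (step j (sq j)) => q [_ _ q3] /=.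
exact: q3.
Qed.

Lemma meager_ND' (A : set cantor_space) : meager A ->
  exists G : nat -> set cantor_space, (forall j, ND' (G j)) /\ A `<=` \bigcup_j G j.
Proof.
move=> [F [HF AF]]; exists F; split => // j; exact: ND_ND'.
Qed.

Lemma ND'_U (A B : set cantor_space) : ND' A -> ND' B -> ND' (A `|` B).
Proof.
move=> HA HB f n.
have [g1 [m1 [n1 a1 c1]]] := HA f n.
have [g2 [m2 [n2 a2 c2]]] := HB g1 m1.
exists g2, m2; split.
- exact: leq_trans n1 n2.
- by move=> i i_n; rewrite a2 ?a1 //; exact: leq_trans i_n n1.
- move=> t Ht [At|Bt]; last exact: c2 Ht Bt.
  apply: (c1 t) At => i i_m1; rewrite Ht ?a2 //; exact: leq_trans i_m1 n2.
Qed.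

Definition flipafter (n : nat) (t : cantor_space) : cantor_space :=
  fun i => if (i < n)%N then t i else ~~ t i.

Lemma flipafterK n t : flipafter n (flipafter n t) = t.
Proof.
apply: functional_extensionality_dep => i; rewrite /flipafter.
by case: (i < n)%N; rewrite ?negbK.
Qed.

Lemma flipafter_inv n (g f : cantor_space) i :
  g i = flipafter n f i -> flipafter n g i = f i.
Proof. by rewrite /flipafter => ->; case: (i < n)%N; rewrite ?negbK. Qed.

Lemma ND'_flip n (F : set cantor_space) : ND' F -> ND' (flipafter n @^-1` F).
Proof.
move=> HF f k.
have [g [m [km a c]]] := HF (flipafter n f) k.
exists (flipafter n g), m; split => //.
- by move=> i ik; apply: flipafter_inv; rewrite a.
- move=> t Ht /=; apply: c => i im.
  exact: flipafter_inv (Ht i im).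
Qed.

Lemma meager_avoid (A : set cantor_space) : meager A ->
  forall f n, exists t, cyl f n t /\ ~ A t.
Proof.
move=> /meager_ND' [G [HG AG]] f n.
have [t [Ht Gt]] := @BaireL _ HG f n.
exists t; split => // /AG [j _ Gj]; exact: Gt Gj.
Qed.

Lemma ideal_meager (I : set (set nat)) : is_ideal I ->
  has_Baire_property (ideal_as_cantor_set I) ->
  exists G : nat -> set cantor_space,
    (forall j, ND' (G j)) /\ ideal_as_cantor_set I `<=` \bigcup_j G j.
Proof.
move=> [Iu Is IT Ifin] [U [M [oU mM E]]].
have [[f0 Uf0]|nU] := pselect (exists f, U f); last first.
  apply: meager_ND'; move: mM => [F [HF MF]]; exists F; split => //.
  move=> t It; apply: MF; move: It; rewrite E => -[[Ut _]|[Mt _]] //.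
  by exfalso; apply: nU; exists t.
exfalso.
have nU : nbhs f0 U by move: oU; rewrite openE => /(_ _ Uf0).
have [n Hn] := @nbhs_cyl _ _ nU.
have [G [HG MG]] := @meager_ND' _ mM.
have HG' : forall j, ND' (G j `|` (flipafter n @^-1` G j)).
  by move=> j; apply: ND'_U => //; exact: ND'_flip.
have [A [An AG]] := @BaireL _ HG' f0 n.
have AM : ~ M A by move=> /MG [j _ Gj]; apply: (AG j); left.
have hAM : ~ M (flipafter n A) by move=> /MG [j _ Gj]; apply: (AG j); right.
have hAn : cyl f0 n (flipafter n A) by move=> i i_n; rewrite /flipafter i_n An.
have IA : ideal_as_cantor_set I A by rewrite E; left; split => //; apply: Hn.
have IhA : ideal_as_cantor_set I (flipafter n A).
  by rewrite E; left; split => //; apply: Hn.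
apply: IT.
have fin : finite_set [set i | (i < n)%N].
  apply: (@sub_finite_set _ _ `I_n) => //; exact: finite_II.
have := Iu _ _ (Iu _ _ IA IhA) (Ifin _ fin).
congr I; rewrite eqEsubset; split => // i _ /=.
have [i_n|n_i] := ltnP i n; first by right.
by left; rewrite /flipafter ltnNge n_i /=; case: (A i); [left|right].
Qed.

Definition mix (rho pi : cantor_space) (a : nat) : cantor_space :=
  fun i => if (i < a)%N then rho i else pi i.

Lemma ext_claim (H : set cantor_space) : ND' H -> forall q a (beta : cantor_space),
  exists b (pi : cantor_space), (a < b)%N /\ forall rho : cantor_space,
    (forall i, (q <= i < a)%N -> rho i = beta i) ->
    forall t, cyl (mix rho pi a) b t -> ~ H t.
Proof.
move=> HH; elim=> [|q IH] a beta.
  have [g [m [am ag c]]] := HH beta a.+1.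
  exists m, g; split => // rho rb t Ht; apply: c => i im.
  rewrite Ht // /mix; case: ifP => // ia.
  by rewrite rb ?ia // ag // ltnS ltnW.
pose beta1 : cantor_space := fun i => if i == q then true else beta i.
have [b1 [pi1 [ab1 H1]]] := IH a beta1.
pose beta2 : cantor_space := mix (fun i => if i == q then false else beta i) pi1 a.
have [b2 [pi2 [bb2 H2]]] := IH b1 beta2.
exists b2, (mix pi1 pi2 b1); split; first exact: ltn_trans ab1 bb2.
move=> rho rb t Ht.
case rq : (rho q).
  apply: (H1 rho) => [i /andP[qi ia]|].
    rewrite /beta1; case: eqP => [->//|/eqP iq].
    by apply: rb; rewrite ia andbT ltn_neqAle eq_sym iq.
  move=> i ib1; rewrite Ht ?(ltn_trans ib1 bb2) // /mix.
  by case: ifP => //; rewrite ib1.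
apply: (H2 (mix rho pi1 a)) => [i /andP[qi ib1]|].
  rewrite /beta2 /mix; case: ifP => // ia.
  case: eqP => [->//|/eqP iq].
  by apply: rb; rewrite ia andbT ltn_neqAle eq_sym iq.
move=> i ib2; rewrite Ht // /mix.
case: ifP => ia; first by rewrite (ltn_trans ia ab1).
by case: ifP.
Qed.

Lemma ext_all (H : set cantor_space) : ND' H -> forall a,
  exists b (pi : cantor_space), (a < b)%N /\ forall rho t,
    cyl (mix rho pi a) b t -> ~ H t.
Proof.
move=> HH a; have [b [pi [ab Hb]]] := @ext_claim _ HH a a (fun _ => false).
exists b, pi; split => // rho; apply: Hb => i /andP[ai ia].
by move: (leq_ltn_trans ai ia); rewrite ltnn.
Qed.

Lemma talagrand (I : set (set nat)) : is_ideal I ->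
  (exists G : nat -> set cantor_space,
    (forall j, ND' (G j)) /\ ideal_as_cantor_set I `<=` \bigcup_j G j) ->
  exists nk : nat -> nat, (forall k, (nk k < nk k.+1)%N) /\
    forall A, I A -> exists K, forall k, (K <= k)%N ->
      exists i, (nk k <= i < nk k.+1)%N /\ ~ A i.
Proof.
move=> [Iu Is IT Ifin] [G [HG IG]].
pose Hs := fix Hs k := match k with 0 => G 0%N | k.+1 => Hs k `|` G k.+1 end.
have HHs k : ND' (Hs k) by elim: k => [|k IH] //=; exact: ND'_U.
have GHs j k : (j <= k)%N -> G j `<=` Hs k.
  elim: k => [|k IH]; first by rewrite leqn0 => /eqP ->.
  rewrite leq_eqVlt => /orP[/eqP -> t Gt|]; first by right.
  by rewrite ltnS => /IH H t /H; left.
have ext : forall a k, {bp : nat * cantor_space | (a < bp.1)%N /\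
    forall rho t, cyl (mix rho bp.2 a) bp.1 t -> ~ Hs k t}.
  move=> a k; apply: cid.
  by have [b [pi [ab Hb]]] := @ext_all _ (HHs k) a; exists (b, pi).
pose nk := fix nk k := match k with 0 => 0%N | k.+1 => (proj1_sig (ext (nk k) k)).1 end.
pose pk k := (proj1_sig (ext (nk k) k)).2.
have nkS k : nk k.+1 = (proj1_sig (ext (nk k) k)).1 by [].
have incr k : (nk k < nk k.+1)%N by rewrite nkS; case: (ext (nk k) k) => -[b p] [].
have pkP k : forall rho t, cyl (mix rho (pk k) (nk k)) (nk k.+1) t -> ~ Hs k t.
  by rewrite /pk nkS; case: (ext (nk k) k) => -[b p] [].
have mono k k' : (k <= k')%N -> (nk k <= nk k')%N.
  move=> kk'; rewrite -(subnKC kk'); elim: (k' - k)%N => [|d IH].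
    by rewrite addn0.
  by rewrite addnS; apply: leq_trans IH (ltnW (incr _)).
have uniq k k' i : (nk k <= i < nk k.+1)%N -> (nk k' <= i < nk k'.+1)%N -> k = k'.
  move=> /andP[a1 b1] /andP[a2 b2]; apply/eqP; rewrite eqn_leq; apply/andP; split.
    rewrite leqNgt; apply/negP => /mono h; move: (leq_trans h a1).
    by rewrite leqNgt b2.
  rewrite leqNgt; apply/negP => /mono h; move: (leq_trans h a2).
  by rewrite leqNgt b1.
exists nk; split => // A IA.
apply: contrapT => /forallNP HK.
have full : forall K, exists k, (K <= k)%N /\
    forall i, (nk k <= i < nk k.+1)%N -> A i.
  move=> K; have := HK K => /existsNP [k /not_implyP [Kk /forallNP Hk]].
  exists k; split => // i Hi; have := Hk i => /not_andP [//|/contrapT//].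
pose A' := [set i | A i /\ forall k, (nk k <= i < nk k.+1)%N ->
    (forall i, (nk k <= i < nk k.+1)%N -> A i) -> pk k i].
have IA' : I A' by apply: Is IA => i [].
pose f : cantor_space := fun i => `[< A' i >].
have If : ideal_as_cantor_set I f.
  rewrite /ideal_as_cantor_set /=; congr I: IA'.
  by rewrite eqEsubset; split => i /=; rewrite asboolE.
have [j _ Gj] := IG _ If.
have [k [jk fk]] := full j.
apply: (pkP k f f); last exact: GHs jk _ Gj.
move=> i ik; rewrite /mix; case: ifP => // /negbT; rewrite -leqNgt => ki.
have Hi : (nk k <= i < nk k.+1)%N by rewrite ki ik.
rewrite /f; case pki : (pk k i).
  apply/asboolP; split; first exact: fk.
  by move=> k' Hk' _; rewrite -(uniq _ _ _ Hi Hk').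
apply/asboolP => -[_ /(_ k Hi fk)]; by rewrite pki.
Qed.

Section Ser.
Variables (R : realType) (X : completeNormedModType R).

Lemma series_cvgP (u : nat -> X) : cvgn (series u) <->
  forall e : R, 0 < e -> exists N, forall n m, (N <= n)%N -> (n <= m)%N ->
    `|\sum_(n <= k < m) u k| < e.
Proof.
rewrite -(cauchy_cvgP (series u @ \oo)) cauchy_seriesP; split.
  move=> H e e0; have [[A B] /= [[NA _ HA] [NB _ HB]] HAB] := H e e0.
  exists (maxn NA NB) => n m Nn nm; apply: (HAB (n, m)); split => /=.
    by apply: HA; exact: leq_trans (leq_maxl _ _) Nn.
  by apply: HB; exact: leq_trans (leq_maxr _ _) (leq_trans Nn nm).
move=> H e e0; have [N HN] := H e e0.
exists ([set n | (N <= n)%N], [set n | (N <= n)%N]); first by split; exists N.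
move=> [n m] /= [Nn Nm]; have [nm|mn] := leqP n m; first exact: HN.
by rewrite big_geq ?normr0 // ltnW.
Qed.

Definition UC (x : nat -> X) := forall e : R, 0 < e -> exists N,
  forall M (P : pred nat), `|\sum_(N <= i < M | P i) x i| < e.

Lemma big_restrict (N n m : nat) (P : pred nat) (F : nat -> X) : (N <= n)%N ->
  \sum_(N <= k < m | (n <= k)%N && P k) F k = \sum_(n <= k < m | P k) F k.
Proof.
move=> Nn; have [nm|mn] := leqP n m.
  rewrite (@big_cat_nat _ _ _ n N m _ _ Nn nm) /= big_nat_cond big1 ?add0r.
    rewrite [LHS]big_nat_cond [RHS]big_nat_cond; apply: eq_bigl => k.
    by case: (n <= k)%N.
  move=> k /andP[/andP[_ kn] /andP[nk _]].
  by move: (leq_ltn_trans nk kn); rewrite ltnn.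
rewrite [RHS]big_geq ?(ltnW mn) // big_nat_cond big1 // => k.
move=> /andP[/andP[_ km] /andP[nk _]].
by move: (leq_ltn_trans (leq_trans nk (ltnW km)) mn); rewrite ltnn.
Qed.

Lemma sgn_split (t : nat -> bool) (x : nat -> X) n m :
  \sum_(n <= k < m) (sgn_of (R:=R) (t k) *: x k) =
  \sum_(n <= k < m | t k) x k - \sum_(n <= k < m | ~~ t k) x k.
Proof.
rewrite (bigID t) /= -sumrN; congr (_ + _); apply: eq_bigr => k.
  by move=> ->; rewrite /sgn_of scale1r.
by move=> /negbTE ->; rewrite /sgn_of scaleN1r.
Qed.

Lemma UC_signs (x : nat -> X) : UC x -> forall t : nat -> bool,
  cvgn (series (fun n => sgn_of (R:=R) (t n) *: x n)).
Proof.
move=> Hx t; apply/series_cvgP => e e0.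
have [N HN] := Hx (e / 2) (divr_gt0 e0 (ltr0Sn _ 1)).
exists N => n m Nn nm.
rewrite sgn_split -(@big_restrict N n m t x Nn) -(@big_restrict N n m (fun k => ~~ t k) x Nn).
apply: le_lt_trans (ler_normB _ _) _.
by rewrite (splitr e) ltrD // HN.
Qed.

Lemma cvg_Iconv (I : set (set nat)) (u : nat -> X) : is_ideal I ->
  cvgn (series u) -> I_convergent_series I u.
Proof.
move=> [Iu Is IT Ifin] cu; exists (lim (series u @ \oo)) => e e0.
apply: Ifin.
have := (cvgrPdistC_lt _ _).1 cu e e0 => -[N _ HN].
apply: (@sub_finite_set _ _ `I_N); last exact: finite_II.
move=> n /=; rewrite ltNge => /negP Hn; apply: contrapT => nN.
apply: Hn; apply: ltW; apply: HN => /=.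
rewrite leqNgt; apply/negP => /ltnW /= Hlt; apply: nN; exact: Hlt.
Qed.

Lemma bound_fin (f : nat -> nat) m : exists M, forall k, (k < m)%N -> (f k < M)%N.
Proof.
elim: m => [|m [M HM]]; first by exists 0%N.
exists (maxn M (f m).+1) => k; rewrite ltnS leq_eqVlt => /orP[/eqP->|/HM h].
  by rewrite leq_max leqnn orbT.
by rewrite leq_max h.
Qed.

Lemma UC_unc (x : nat -> X) : UC x -> unconditionally_convergent x.
Proof.
move=> Hx p [g pg gp]; apply/series_cvgP => e e0.
have [N HN] := Hx e e0.
have [N' HN'] := bound_fin g N.
exists N' => n m N'n nm.
have [M0 HM0] := bound_fin p m.
pose M := maxn M0 N.
have HM k : (k < m)%N -> (p k < M)%N by move=> /HM0 h; rewrite leq_max h.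
have NM : (N <= M)%N by rewrite leq_maxr.
have -> : \sum_(n <= k < m) x (p k) =
    \sum_(N <= j < M | (n <= g j < m)%N) x j.
  rewrite -[RHS]big_filter /index_iota -(big_map p xpredT x).
  apply: perm_big; apply: uniq_perm.
  - rewrite map_inj_uniq ?iota_uniq //; exact: can_inj pg.
  - by rewrite filter_uniq ?iota_uniq.
  move=> j; rewrite mem_filter mem_iota; apply/mapP/idP.
    move=> [k]; rewrite mem_iota subnKC // => /andP[nk km] ->.
    rewrite pg nk km /= subnKC // HM // andbT.
    rewrite leqNgt; apply/negP => /HN' h; move: (leq_trans h N'n).
    by rewrite pg ltnNge nk.
  move=> /andP[/andP[ngj gjm] _]; exists (g j); last by rewrite gp.
  by rewrite mem_iota subnKC // ngj gjm.
exact: HN.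
Qed.

Lemma unc_UC (x : nat -> X) : unconditionally_convergent x -> UC x.
Proof.
move=> Hu; apply: contrapT => nUC.
have [e [e0 He]] : exists e : R, 0 < e /\ forall N, exists MP : nat * pred nat,
    e <= `|\sum_(N <= i < MP.1 | MP.2 i) x i|.
  move/existsNP: nUC => [e /not_implyP [e0 /forallNP H]]; exists e; split => // N.
  have /existsNP [M /existsNP [P /negP]] := H N.
  by rewrite -leNgt => h; exists (M, P).
pose ch N := projT1 (cid (He N)).
have chP N : e <= `|\sum_(N <= i < (ch N).1 | (ch N).2 i) x i|.
  by rewrite /ch; case: cid.
have chlt N : (N < (ch N).1)%N.
  rewrite ltnNge; apply/negP => h; have := chP N.
  by rewrite big_geq // normr0 leNgt e0.
pose a := fix a k := match k with 0 => 0%N | k.+1 => (ch (a k)).1 end.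
pose P k := (ch (a k)).2.
have aS k : a k.+1 = (ch (a k)).1 by [].
have ainc k : (a k < a k.+1)%N by rewrite aS.
have amono k k' : (k <= k')%N -> (a k <= a k')%N.
  move=> kk'; rewrite -(subnKC kk'); elim: (k' - k)%N => [|d IH].
    by rewrite addn0.
  by rewrite addnS; apply: leq_trans IH (ltnW (ainc _)).
have ak k : (k <= a k)%N.
  by elim: k => // k IH; apply: leq_ltn_trans IH (ainc k).
have blk_ex i : exists k, (i < a k.+1)%N.
  by exists i; apply: leq_trans (ak i.+1).
pose blk i := ex_minn (blk_ex i).
have blkP i : (a (blk i) <= i < a (blk i).+1)%N.
  rewrite /blk; case: ex_minnP => k ik kmin; rewrite ik andbT.
  case: k ik kmin => [//|k] ik kmin.
  rewrite leqNgt; apply/negP => /kmin; by rewrite ltnn.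
have blkU i k : (a k <= i < a k.+1)%N -> blk i = k.
  have uniqk k1 k2 : (a k1 <= i < a k1.+1)%N -> (a k2 <= i < a k2.+1)%N -> k1 = k2.
    move=> /andP[a1 b1] /andP[a2 b2]; apply/eqP; rewrite eqn_leq; apply/andP; split.
      rewrite leqNgt; apply/negP => /amono h; move: (leq_trans h a1).
      by rewrite leqNgt b2.
    rewrite leqNgt; apply/negP => /amono h; move: (leq_trans h a2).
    by rewrite leqNgt b1.
  by move=> Hk; apply: uniqk (blkP i) Hk.
pose F k := [seq j <- iota (a k) (a k.+1 - a k) | P k j].
pose L k := F k ++ [seq j <- iota (a k) (a k.+1 - a k) | predC (P k) j].
have Lperm k : perm_eq (L k) (iota (a k) (a k.+1 - a k)).
  by rewrite /L /F perm_filterC.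
have Lsize k : size (L k) = (a k.+1 - a k)%N by rewrite (perm_size (Lperm k)) size_iota.
have Luniq k : uniq (L k) by rewrite (perm_uniq (Lperm k)) iota_uniq.
have Lmem k j : (j \in L k) = (a k <= j < a k.+1)%N.
  by rewrite (perm_mem (Lperm k)) mem_iota subnKC // ltnW.
pose p i := nth 0%N (L (blk i)) (i - a (blk i)).
pose q j := (a (blk j) + index j (L (blk j)))%N.
have pq : cancel p q.
  move=> i; have /andP[h1 h2] := blkP i.
  have idx : (i - a (blk i) < size (L (blk i)))%N.
    by rewrite Lsize ltn_sub2r // (leq_ltn_trans h1 h2).
  have pin : p i \in L (blk i) by apply: mem_nth.
  have bp : blk (p i) = blk i by apply: blkU; rewrite -Lmem.
  by rewrite /q bp /p index_uniq // subnKC.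
have qp : cancel q p.
  move=> j; have /andP[h1 h2] := blkP j.
  have jin : j \in L (blk j) by rewrite Lmem h1 h2.
  have idx : (index j (L (blk j)) < size (L (blk j)))%N by rewrite index_mem.
  have bq : blk (q j) = blk j.
    apply: blkU; rewrite leq_addr /=; move: idx; rewrite Lsize.
    by rewrite -(ltn_add2l (a (blk j))) subnKC // ltnW.
  by rewrite /p bq /q addKn nth_index.
have := Hu p (Bijective pq qp) => /series_cvgP /(_ e e0) [N HN].
set aN := a N.
have Fsize : (size (F N) <= a N.+1 - a N)%N.
  by rewrite size_filter; apply: leq_trans (count_size _ _) _; rewrite size_iota.
have := HN aN (aN + size (F N))%N (leq_trans (ak N) (leqnn _)) (leq_addr _ _).
rewrite -{1}(add0n aN) big_addn addKn.
rewrite (@eq_big_nat _ _ _ 0 (size (F N)) _ (fun i => x (nth 0%N (F N) i))); last first.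
  move=> i /andP[_ iF]; rewrite /p.
  have bi : blk (i + aN) = N.
    apply: blkU; rewrite leq_addl andTb -(subnK (ltnW (ainc N))) ltn_add2r.
    exact: leq_trans iF Fsize.
  by rewrite bi addnK /L nth_cat iF.
rewrite -(big_nth 0%N xpredT x) /F big_filter.
by rewrite ltNge chP.
Qed.
End Ser.

Arguments UC {R X} x.
Section Esc.
Variables (R : realType) (X : completeNormedModType R).

Definition sgs (x : nat -> X) (t : nat -> bool) : nat -> X :=
  fun n => sgn_of (R:=R) (t n) *: x n.

Lemma series_eq (x : nat -> X) (t u : nat -> bool) n :
  (forall i, (i < n)%N -> t i = u i) -> series (sgs x t) n = series (sgs x u) n.
Proof.
move=> H; rewrite /series /=; apply: eq_big_nat => i /andP[_ i_n].
by rewrite /sgs H.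
Qed.

Lemma escape (x : nat -> X) (eps : R) : 0 < eps ->
  (forall N, exists MP : nat * pred nat,
      eps <= `|\sum_(N <= i < MP.1 | MP.2 i) x i|) ->
  forall (d : X) (sigma : nat -> bool) (a : nat),
  exists t' b, [/\ (forall i, (i < a)%N -> t' i = sigma i), (a <= b)%N &
    forall n, (b <= n)%N -> eps / 2 < `|series (sgs x t') n - d| ].
Proof.
move=> eps0 He d sigma a.
have [[M P] /= HMP] := He a.
have aM : (a < M)%N.
  rewrite ltnNge; apply/negP => h; move: HMP.
  by rewrite big_geq // normr0 leNgt eps0.
pose t1 : nat -> bool := fun i => if (i < a)%N then sigma i else true.
pose t2 : nat -> bool := fun i => if (i < a)%N then sigma i else ~~ ((i < M)%N && P i).
have diff : series (sgs x t1) M - series (sgs x t2) M =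
    2 *: \sum_(a <= i < M | P i) x i.
  rewrite /series /= -sumrB scaler_sumr -(@big_restrict _ _ 0 a M P _ (leq0n a)).
  rewrite [RHS]big_mkcond /=; apply: eq_big_nat => i /andP[_ iM].
  rewrite /sgs /t1 /t2; case: ifP => ia.
    by rewrite subrr leqNgt ia.
  rewrite [(a <= i)%N]leqNgt ia iM /=; case: (P i) => /=.
    by rewrite /sgn_of scale1r scaleN1r opprK scaler_nat mulr2n.
  by rewrite subrr.
have big2 : 2 * eps <= `|series (sgs x t1) M - series (sgs x t2) M|.
  rewrite diff normrZ ger0_norm // ler_pM2l //.
have [t3 [t3a c_far]] : exists t3 : nat -> bool, (forall i, (i < a)%N -> t3 i = sigma i)
    /\ eps / 2 < `|series (sgs x t3) M - d|.
  have [h1|h1] := ltrP (eps / 2) `|series (sgs x t1) M - d|.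
    by exists t1; split => // i ia; rewrite /t1 ia.
  have [h2|h2] := ltrP (eps / 2) `|series (sgs x t2) M - d|.
    by exists t2; split => // i ia; rewrite /t2 ia.
  exfalso.
  have := ler_distD d (series (sgs x t1) M) (series (sgs x t2) M).
  rewrite (distrC d) => h3.
  have : 2 * eps <= eps / 2 + eps / 2 by apply: le_trans big2 (le_trans h3 (lerD h1 h2)).
  rewrite -splitr; lra.
pose c := series (sgs x t3) M.
pose gb (k : nat) (s : X) : bool := `[< eps / 2 < `|s + x (M + k)%N - d| >].
pose st := fix st k := match k with
  0 => c | k.+1 => st k + sgn_of (R:=R) (gb k (st k)) *: x (M + k)%N end.
pose t' : nat -> bool := fun i => if (i < M)%N then t3 i else gb (i - M)%N (st (i - M)%N).
have stS k : st k.+1 = st k + sgn_of (R:=R) (gb k (st k)) *: x (M + k)%N by [].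
have inv k : eps / 2 < `|st k - d|.
  elim: k => [//|k IH]; rewrite stS /gb; case: asboolP => h.
    by rewrite /sgn_of scale1r.
  rewrite /sgn_of scaleN1r.
  have h' : `|st k + x (M + k)%N - d| <= eps / 2 by rewrite leNgt; apply/negP.
  rewrite ltNge; apply/negP => h2.
  have e2 : (st k - d) *+ 2 = (st k + x (M + k)%N - d) + (st k - x (M + k)%N - d).
    rewrite mulr2n; set s := st k; set y := x (M + k)%N.
    by rewrite [RHS]addrACA [s + y + _]addrACA subrr addr0 [LHS]addrACA.
  have := ler_normD (st k + x (M + k)%N - d) (st k - x (M + k)%N - d).
  rewrite -e2 normrMn mulr2n => h3.
  have := le_trans h3 (lerD h' h2); lra.
have ser k : series (sgs x t') (M + k)%N = st k.
  elim: k => [|k IH].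
    rewrite addn0 (@series_eq _ _ t3) // => i iM; by rewrite /t' iM.
  rewrite addnS -(subrK (series (sgs x t') (M + k)%N) (series (sgs x t') (M + k).+1)).
  rewrite seriesSB IH stS addrC; congr (_ + _).
  by rewrite /sgs /t' ltnNge leq_addr /= addKn.
exists t', M; split.
- by move=> i ia; rewrite /t' (ltn_trans ia aM) t3a.
- exact: ltnW.
- by move=> n Mn; rewrite -(subnKC Mn) ser; exact: inv.
Qed.

Lemma nUC_wit (x : nat -> X) : ~ UC x -> exists eps : R, 0 < eps /\
  forall N, exists MP : nat * pred nat, eps <= `|\sum_(N <= i < MP.1 | MP.2 i) x i|.
Proof.
move=> nUC; move/existsNP: nUC => [e /not_implyP [e0 /forallNP H]].
exists e; split => // N.
have /existsNP [M /existsNP [P /negP]] := H N.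
by rewrite -leNgt => h; exists (M, P).
Qed.

Lemma hard (I : set (set nat)) (x : nat -> X) : is_ideal I ->
  has_Baire_property (ideal_as_cantor_set I) -> ~ UC x -> meager (B_set (R:=R) I x).
Proof.
move=> HI HBP /nUC_wit [eps [eps0 He]].
have [nk [incr TP]] := @talagrand _ HI (@ideal_meager _ HI HBP).
have nkge k : (k <= nk k)%N by elim: k => // k IH; exact: leq_ltn_trans IH (incr k).
pose D K m := [set t : cantor_space | forall k, (K <= k)%N -> exists i,
  (nk k <= i < nk k.+1)%N /\
  `|series (sgs x t) i.+1 - series (sgs x t) m.+1| <= eps / 2].
pose F j : set cantor_space := if @unpickle (prod nat nat) j is Some (K, m) then D K m else set0.
exists F; split.
  move=> j; rewrite /nowhere_dense -subset0 => t0 /= Hint.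
  have Ct0 := nbhs_singleton Hint.
  move: Hint Ct0; rewrite /F; case: (@unpickle (prod nat nat) j) => [[K m]|] Hint Ct0; last first.
    by have [u [[]]] := Ct0 _ (cyl_nbhs t0 0).
  have [n Hn] := @nbhs_cyl _ _ Hint.
  pose a := maxn n m.+1.
  pose d := series (sgs x t0) m.+1.
  have [t' [b [t'a ab far]]] := @escape x eps eps0 He d t0 a.
  have Ct' : closure (D K m) t'.
    apply: Hn => i i_n; apply: t'a; exact: leq_trans i_n (leq_maxl _ _).
  pose k := maxn K b.
  have [u [Du Cu]] := Ct' _ (cyl_nbhs t' (nk k.+1)).
  have [i [/andP[ki ik] Hi]] := Du k (leq_maxl _ _).
  have e1 : series (sgs x u) i.+1 = series (sgs x t') i.+1.
    apply: series_eq => i' i'i; apply: Cu; exact: leq_trans i'i ik.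
  have ma : (m.+1 <= a)%N by exact: leq_maxr.
  have bi : (b <= i)%N.
    by apply: leq_trans (leq_trans (leq_maxr K b) (nkge k)) ki.
  have e2 : series (sgs x u) m.+1 = d.
    rewrite (@series_eq _ _ t'); last first.
      move=> i' i'm; apply: Cu; apply: leq_trans i'm _.
      apply: leq_trans ma (leq_trans ab (leq_trans bi (ltnW ik))).
    apply: series_eq => i' i'm; apply: t'a; exact: leq_trans i'm ma.
  have := far i.+1 (leq_trans bi (leqnSn i)).
  by rewrite -e1 -e2 ltNge Hi.
move=> t [l Hl].
have e4 : 0 < eps / 4 by apply: divr_gt0.
have [K HK] := TP _ (Hl _ e4).
have [m [_ Hm]] := HK K (leqnn K).
exists (pickle (K, m)) => //; rewrite /F pickleK => k Kk.
have [i [Pi Hi]] := HK k Kk; exists i; split => //.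
move: Hm Hi; rewrite /partial_sums /= => /negP; rewrite -leNgt => Hm /negP; rewrite -leNgt => Hi.
apply: le_trans (ler_distD l _ _) _.
rewrite (distrC l); move: Hm Hi; rewrite /sgs; lra.
Qed.
End Esc.

Theorem corollary3p5 (R : realType) (X : completeNormedModType R)
    (I : set (set nat)) (x : nat -> X) :
  is_ideal I ->
  has_Baire_property (ideal_as_cantor_set I) ->
  (unconditionally_convergent x <-> ~ meager (B_set I x)).
Proof.
move=> HI HBP; split.
  move=> Hu /meager_avoid /(_ (fun _ => true) 0%N) [t [_ nB]]; apply: nB.
  apply: cvg_Iconv HI _; exact: (@UC_signs R X x (@unc_UC R X x Hu) t).
move=> nM; apply: (@UC_unc R X x); apply: contrapT => nUC; apply: nM.
exact: (@hard R X I x HI HBP nUC).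
Qed.
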